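(* Let $\mathcal{G}=\{U^g\mid g\in G=\mathbb{Z}_2^{\times(n-k)}\}$ be the stabilizer group of an $[[n,k]]$ Pauli stabilizer code, indexed so that $U^e=I^{\otimes n}$ and $U^gU^h=U^{gh}$. There exists a subset $R$ consisting of $n-k$ of the $n$ physical qubits such that 1. $\mathcal{G}_R=\{U^g_R\mid g\in G\}$ is a faithful, unitary, possibly projective representation of $G$ on $\mathcal{H}_R=(\mathbb{C}^2)^{\otimes(n-k)}$ satisfying $U^g_RU^{g'}_R=c(g,g')U^{gg'}_R$ with $c(g,g')\in\{\pm1,\pm i\}$, and 2. there exists a seed state $\ket{e}_R\in\mathcal{H}_R$ such that $\{\ket{g}_R=U^g_R\ket{e}_R\mid g\in G\}$ is an orthonormal basis of $\mathcal{H}_R$ that transforms as $U^g_R\ket{g'}_R=c(g,g')\ket{gg'}_R$.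
   Context: $\mathcal{P}_n$ is the $n$-qubit Pauli group (operators $i^\lambda O_1\otimes\cdots\otimes O_n$, $\lambda\in\{0,1,2,3\}$, $O_j\in\{I,X,Y,Z\}$). An $[[n,k]]$ Pauli stabilizer code is given by a faithful unitary representation $g\mapsto U^g\in\mathcal{P}_n$ of $G=\mathbb{Z}_2^{\times(n-k)}$ on $(\mathbb{C}^2)^{\otimes n}$ with $-I\notin\mathcal{G}$. For a subset $R$ of $n-k$ qubits with complement $S$ and a Pauli string $U^g=i^\lambda O_1\otimes\cdots\otimes O_n$, $U^g_R$ denotes the Pauli string $\bigotimes_{a\in R}O_a$ on the qubits of $R$ with the prefactor removed (equivalently $U^g_R=2^{-k}\mathrm{Tr}_S[\pi_S(U^g)]$, where $\pi_S$ replaces the letters on $S$ by $I$ and removes the prefactor). The phases $c(g,g')$ are defined by $U^g_RU^{g'}_R=c(g,g')U^{gg'}_R$. *)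

(* Defs.v *)
From HB Require Import structures.
From mathcomp Require Import all_boot all_order all_algebra all_field.
Set Implicit Arguments. Unset Strict Implicit. Unset Printing Implicit Defensive.
Import Order.TTheory GRing.Theory Num.Theory.
Local Open Scope ring_scope.

Inductive pauli := PI | PX | PY | PZ.

Definition pauli_code (p : pauli) : 'I_4 :=
  match p with PI => inord 0 | PX => inord 1 | PY => inord 2 | PZ => inord 3 end.
Definition code_pauli (i : 'I_4) : pauli :=
  match val i with 0 => PI | 1 => PX | 2 => PY | _ => PZ end.
Lemma pauli_codeK : cancel pauli_code code_pauli.
Proof. by case; rewrite /code_pauli /= inordK. Qed.
HB.instance Definition _ := Finite.copy pauli (can_type pauli_codeK).

(* Matrix entries <b|O|b'> of the Pauli letters in the computational basis
   (false = |0>, true = |1>). Y = [[0,-i],[i,0]]. *)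
Definition pauli_entry (p : pauli) (b b' : bool) : algC :=
  match p, b, b' with
  | PI, false, false => 1 | PI, true, true => 1
  | PX, false, true => 1 | PX, true, false => 1
  | PY, false, true => - 'i | PY, true, false => 'i
  | PZ, false, false => 1 | PZ, true, true => -1
  | _, _, _ => 0
  end.

(* Hilbert space of a finite set Q of qubits: (C^2)^{(x) Q}, with the
   computational basis indexed by bit strings {ffun Q -> bool}. *)
Definition hdim (Q : finType) : nat := #|{ffun Q -> bool}|.
Definition op (Q : finType) := 'M[algC]_(hdim Q).
Definition ket (Q : finType) := 'cV[algC]_(hdim Q).

Definition bits (Q : finType) (i : 'I_(hdim Q)) : {ffun Q -> bool} :=
  @enum_val {ffun Q -> bool} {: {ffun Q -> bool}} i.

Definition pstr_mx (Q : finType) (s : {ffun Q -> pauli}) : op Q :=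
  \matrix_(i, j) \prod_(q : Q)
     pauli_entry (s q) (bits i q) (bits j q).

Record pauli_op (n : nat) := PauliOp {
  pphase : 'I_4;
  pletters : {ffun 'I_n -> pauli} }.

Definition pauli_mx (n : nat) (P : pauli_op n) : op 'I_n :=
  ('i ^+ pphase P) *: pstr_mx (pletters P).

(* The stabilizer group is indexed by G = Z_2^{n-k}, written additively
   as row vectors over F_2 (so the group product gh is g + h, e is 0). *)
Definition Zgrp (m : nat) := 'rV['F_2]_m.

Definition stabilizer_code (n k : nat) (U : Zgrp (n - k) -> pauli_op n) : Prop :=
  [/\ pauli_mx (U 0) = 1%:M,
      (forall g h, pauli_mx (U (g + h)) = pauli_mx (U g) *m pauli_mx (U h)),
      injective (fun g => pauli_mx (U g)) &
      (forall g, pauli_mx (U g) <> - 1%:M)].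

(* Restriction U_R of a Pauli operator to a subset R of qubits: the letters
   on R, with the prefactor removed, acting on H_R. *)
Definition qubits_of (n : nat) (R : {set 'I_n}) : finType := {q : 'I_n | q \in R}.

Definition restr (n : nat) (R : {set 'I_n}) (P : pauli_op n) : op (qubits_of R) :=
  pstr_mx [ffun q : qubits_of R => pletters P (val q)].

Definition adjmx (m p : nat) (A : 'M[algC]_(m, p)) : 'M[algC]_(p, m) :=
  (map_mx Num.conj A)^T.
Definition dotv (m : nat) (u v : 'cV[algC]_m) : algC := (adjmx u *m v) 0 0.

(* Main.v *)
Require Import Defs.
From HB Require Import structures.
From mathcomp Require Import all_boot all_order all_algebra all_field.
Import Order.TTheory GRing.Theory Num.Theory.
Local Open Scope ring_scope.

Module Helpers.
Set Implicit Arguments. Unset Strict Implicit. Unset Printing Implicit Defensive.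

Definition mulp (a b : pauli) : pauli :=
  match a, b with
  | PI, x => x | x, PI => x
  | PX, PX => PI | PY, PY => PI | PZ, PZ => PI
  | PX, PY => PZ | PY, PX => PZ
  | PY, PZ => PX | PZ, PY => PX
  | PZ, PX => PY | PX, PZ => PY
  end.
Definition p1 (a b : pauli) : algC :=
  match a, b with
  | PX, PY => 'i | PY, PZ => 'i | PZ, PX => 'i
  | PY, PX => -'i | PZ, PY => -'i | PX, PZ => -'i
  | _, _ => 1 end.
Definition anti (a b : pauli) : bool :=
  match a, b with PI, _ => false | _, PI => false
  | PX, PX => false | PY, PY => false | PZ, PZ => false | _, _ => true end.
Definition sgn a b : algC := if anti a b then -1 else 1.
Definition det (L a : pauli) : bool :=
  match L, a with PX, PZ => true | PX, PY => true | PZ, PX => true | PZ, PY => true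
  | PY, PX => true | PY, PZ => true | _, _ => false end.
Definition tr1 (a : pauli) : algC := match a with PI => 1 + 1 | _ => 0 end.

Ltac csimp := do 3 rewrite ?mul0r ?mulr0 ?mul1r ?mulr1 ?addr0 ?add0r ?mulrN ?mulNr ?mulrNN ?opprK ?mulCii ?opprK.

Lemma pentry_mul a b x y :
  \sum_(c : bool) pauli_entry a x c * pauli_entry b c y = p1 a b * pauli_entry (mulp a b) x y.
Proof. rewrite big_bool; case: a; case: b; case: x; case: y => /=; csimp => //.
all: by rewrite ?mulr1 ?mul1r. Qed.

Lemma p1_sgn a b : p1 a b = sgn a b * p1 b a.
Proof. by case: a; case: b; rewrite /sgn /anti /= ; csimp. Qed.

Lemma cI : ('i)^* = -'i :> algC.
Proof. have := conjCi algC. move=> ->. done. Qed.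
Lemma cN : (-'i)^* = 'i :> algC.
Proof. rewrite rmorphN; exact: (etrans (congr1 -%R cI) (opprK _)). Qed.

Lemma conj_pentry a x y : (pauli_entry a x y)^* = pauli_entry a y x.
Proof. case: a; case: x; case: y; rewrite /= ?rmorph1 ?rmorph0 ?cN ?cI ?rmorphN ?rmorph1 //. Qed.

Lemma tr1E a : \sum_(c : bool) pauli_entry a c c = tr1 a.
Proof. by rewrite big_bool; case: a => /=; rewrite ?addr0 ?add0r ?addrN ?addNr. Qed.

Lemma mulpp a : mulp a a = PI. Proof. by case: a. Qed.
Lemma mulpI a : mulp a PI = a. Proof. by case: a. Qed.
Lemma mulIp a : mulp PI a = a. Proof. by case: a. Qed.
Lemma mulpC a b : mulp a b = mulp b a. Proof. by case: a; case: b. Qed.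
Lemma mulp_eqI a b : mulp a b = PI -> a = b. Proof. by case: a; case: b. Qed.
Lemma p1pp a : p1 a a = 1. Proof. by case: a. Qed.
Lemma detI L : det L PI = false. Proof. by case: L. Qed.
Lemma det_mul L a b : L <> PI -> det L (mulp a b) = det L a (+) det L b.
Proof. by case: L; case: a; case: b. Qed.
Lemma p1_in a b : p1 a b \in [:: 1; -1; 'i; - 'i].
Proof. by case: a; case: b; rewrite /= !inE eqxx ?orbT. Qed.
Lemma p1_neq0 a b : p1 a b != 0.
Proof. case: a; case: b; rewrite /= ?oner_eq0 ?oppr_eq0 ?neq0Ci //. Qed.

Lemma sum_bits (Q : finType) (F : {ffun Q -> bool} -> algC) :
  \sum_(i < hdim Q) F (bits i) = \sum_f F f.
Proof.
symmetry; rewrite (reindex (@bits Q)) //=.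
by exists (@enum_rank _) => x _; [apply: enum_valK | apply: enum_rankK].
Qed.

Lemma sum_prod_bits (Q : finType) (F : Q -> bool -> algC) :
  \sum_(i < hdim Q) \prod_q F q (bits i q) = \prod_q \sum_b F q b.
Proof. by rewrite (sum_bits (fun f => \prod_q F q (f q))) bigA_distr_bigA. Qed.

Section Pstr.
Variable Q : finType.
Implicit Types s t u : {ffun Q -> pauli}.

Definition pmul s t : {ffun Q -> pauli} := [ffun q => mulp (s q) (t q)].
Definition ph s t : algC := \prod_q p1 (s q) (t q).
Definition pone : {ffun Q -> pauli} := [ffun => PI].

Lemma pstrM s t : pstr_mx s *m pstr_mx t = ph s t *: pstr_mx (pmul s t).
Proof.
apply/matrixP => i j; rewrite /pstr_mx !mxE.
rewrite (eq_bigr (fun l => \prod_q (pauli_entry (s q) (bits i q) (bits l q) * pauli_entry (t q) (bits l q) (bits j q)))); last first.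
  move=> l _; rewrite !mxE big_split //.
rewrite (sum_prod_bits (fun q c => pauli_entry (s q) (bits i q) c * pauli_entry (t q) c (bits j q))).
under eq_bigr => q _ do rewrite pentry_mul.
rewrite big_split /= /ph; congr (_ * _); apply: eq_bigr => q _; by rewrite ffunE.
Qed.

Lemma pstr1 : pstr_mx pone = 1%:M.
Proof.
apply/matrixP => i j; rewrite !mxE.
under eq_bigr => q _ do rewrite ffunE.
case: (eqVneq i j) => [->|nij].
  by rewrite big1 // => q _; case: (bits j q).
have [q hq] : exists q, bits i q != bits j q.
  apply/existsP; rewrite -negb_forall; apply: contra nij => /forallP h.
  by apply/eqP/enum_val_inj/ffunP => q; apply/eqP.
rewrite (bigD1 q) //=; move: hq; case: (bits i q); case: (bits j q) => //= _; by rewrite mul0r.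
Qed.

Lemma adj_pstr s : adjmx (pstr_mx s) = pstr_mx s.
Proof.
apply/matrixP => i j; rewrite /adjmx !mxE rmorph_prod; apply: eq_bigr => q _; exact: conj_pentry.
Qed.

Lemma pmulss s : pmul s s = pone.
Proof. by apply/ffunP=> q; rewrite !ffunE mulpp. Qed.

Lemma ph_ss s : ph s s = 1.
Proof. by rewrite /ph big1 // => q _; exact: p1pp. Qed.

Lemma pstr_sq s : pstr_mx s *m pstr_mx s = 1%:M.
Proof. by rewrite pstrM pmulss pstr1 ph_ss scale1r. Qed.

Lemma hdim_gt0 : (0 < hdim Q)%N.
Proof. by rewrite /hdim card_ffun card_bool expn_gt0. Qed.

Lemma one_neq0 : (1%:M : op Q) != 0.
Proof.
apply/eqP => /matrixP /(_ (Ordinal hdim_gt0) (Ordinal hdim_gt0)).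
by rewrite !mxE eqxx /= => /eqP; rewrite oner_eq0.
Qed.

Lemma tr_pstr s : \tr (pstr_mx s) = \prod_q tr1 (s q).
Proof.
rewrite /mxtrace (eq_bigr (fun i => \prod_q pauli_entry (s q) (bits i q) (bits i q))); last first.
  by move=> i _; rewrite /pstr_mx mxE.
rewrite (sum_prod_bits (fun q c => pauli_entry (s q) c c)).
apply: eq_bigr => q _; exact: tr1E.
Qed.

Lemma tr1_0 a : a <> PI -> tr1 a = 0.
Proof. by case: a. Qed.

Lemma pstr_det a b s t : a != 0 -> a *: pstr_mx s = b *: pstr_mx t -> s = t.
Proof.
move=> a0 E; apply/ffunP => q0.
case: (eqVneq (s q0) (t q0)) => // hq; exfalso.
have E2 := congr1 (fun M => M *m pstr_mx t) E.
rewrite /= -!scalemxAl pstr_sq pstrM scalerA in E2.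
have := congr1 mxtrace E2; rewrite !mxtraceZ tr_pstr mxtrace1.
rewrite (bigD1 q0) //= ffunE tr1_0; last first.
  by move/mulp_eqI => e; move: hq; rewrite e eqxx.
rewrite mul0r mulr0 => /esym /eqP; rewrite mulf_eq0 pnatr_eq0 (negPf (lt0n_neq0 (hdim_gt0))) orbF => /eqP b0.
move: E; rewrite b0 scale0r => /(congr1 (fun M => M *m pstr_mx s)).
rewrite -scalemxAl pstr_sq mul0mx => /eqP; rewrite scaler_eq0 (negPf a0) /=.
by rewrite (negPf one_neq0).
Qed.

Lemma pstr_neq0 s : pstr_mx s != 0.
Proof.
apply/eqP => h; move: (pstr_sq s); rewrite h mul0mx => /esym /eqP.
by rewrite (negPf one_neq0).
Qed.

End Pstr.

Lemma addGG m (g : 'rV['F_2]_m) : g + g = 0.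
Proof. apply/matrixP => i j; rewrite !mxE -mulr2n -mulr_natr (@pchar_Fp_0 2) // mulr0 //. Qed.

Lemma det_sgn L a : det L a -> sgn a L = -1.
Proof. by case: L; case: a. Qed.
Lemma sgn_aI a : sgn a PI = 1.
Proof. by case: a. Qed.
Lemma ndet_sgn L a b : L <> PI -> ~~ det L a -> ~~ det L b -> sgn a b = 1.
Proof. by case: L; case: a; case: b. Qed.
Lemma ndet_eq L a : ~~ det L a -> a <> PI -> L <> PI -> a = L.
Proof. by case: L; case: a. Qed.

Lemma m1_neq1 : (-1 : algC) <> 1.
Proof.
move=> h; have := pnatr_eq0 algC 2; rewrite mulr2n -{1}h addNr eqxx //.
Qed.

Definition pickL v := match v with PX => PZ | PY => PZ | _ => PX end.
Lemma pickL_det v : v <> PI -> det (pickL v) v. Proof. by case: v. Qed.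
Lemma pickL_I v : pickL v <> PI. Proof. by case: v. Qed.
Lemma pickL_XZ v : pickL v = PX \/ pickL v = PZ. Proof. by case: v; auto. Qed.

Section Sep.
Variable m n : nat.
Notation G := (Zgrp m).
Notation V := {ffun 'I_n -> pauli}.

Definition comm (s t : V) := \prod_q sgn (s q) (t q) = 1.
Definition kill (q : 'I_n) (s : V) : V := [ffun q' => if q' == q then PI else s q'].

Lemma card_half (H : {set G}) (f : G -> bool) (h0 : G) :
  h0 \in H -> f h0 -> {in H &, forall g h, g + h \in H} ->
  {in H &, forall g h, f (g + h) = f g (+) f h} ->
  #|H| = (2 * #|[set h in H | ~~ f h]|)%N.
Proof.
move=> h0H fh0 hadd hf.
rewrite -(cardsID [set h | ~~ f h] H).
have -> : H :&: [set h | ~~ f h] = [set h in H | ~~ f h].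
  by apply/setP => x; rewrite !inE.
have -> : H :\: [set h | ~~ f h] = (fun h => h + h0) @: [set h in H | ~~ f h].
  apply/setP => x; rewrite !inE negbK; apply/andP/imsetP.
    case=> fx xH; exists (x + h0).
      by rewrite inE hadd // hf // fx fh0.
    by rewrite -addrA addGG addr0.
  case=> h; rewrite inE => /andP [hH fh] ->; split.
    by rewrite hf // fh0 addbT.
  exact: hadd.
by rewrite card_imset ?mul2n ?addnn //; exact: addIr.
Qed.

Lemma sep_main (N : nat) : forall (W : {set 'I_n}) (H : {set G}) (phi : G -> V),
  (#|W| <= N)%N ->
  0 \in H -> {in H &, forall g h, g + h \in H} ->
  {in H &, forall g h, phi (g + h) = pmul (phi g) (phi h)} ->
  {in H, forall h, phi h = pone _ -> h = 0} ->
  {in H, forall h q, q \notin W -> phi h q = PI} ->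
  {in H &, forall g h, comm (phi g) (phi h)} ->
  exists R : {set 'I_n}, exists L : 'I_n -> pauli,
   [/\ R \subset W, (2 ^ #|R|)%N = #|H|, (forall q, L q = PX \/ L q = PZ) &
      {in H, forall h, h != 0 -> exists2 q, q \in R & det (L q) (phi h q)}].
Proof.
elim: N => [|N IH] W H phi hW h0 hadd hmul hker hsupp hcomm.
  have W0 : W = set0 by apply/eqP; rewrite -cards_eq0 -leqn0.
  have hz : {in H, forall h, h = 0}.
    move=> h hH; apply: hker => //; apply/ffunP => q; rewrite ffunE hsupp // W0 inE //.
  exists set0, (fun _ => PZ); split => //.
  - by rewrite sub0set.
  - rewrite cards0 expn0.
    have -> : H = [set 0]; last by rewrite cards1.
    apply/setP => h; rewrite inE; apply/idP/eqP => [hH|->//]; exact: hz.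
  - by right.
  - by move=> h hH; rewrite (hz h hH) eqxx.
case: (leqP #|W| N) => hWN; first by apply: IH.
have [q qW] : exists q, q \in W by apply/set0Pn; rewrite -card_gt0; apply: leq_ltn_trans hWN.
set W' := W :\ q.
have hW' : (#|W'| <= N)%N.
  by move: hW; rewrite (cardsD1 q W) qW add1n ltnS.
have phi0 : phi 0 = pone _.
  by rewrite -(pmulss (phi 0)) -hmul // addr0.
have W'sub : W' \subset W by apply: subsetDl.
have qW' : q \notin W' by rewrite !inE eqxx.
case: (boolP [exists h in H, phi h q != PI]).
  case/exists_inP => h1 h1H hv.
  set v := phi h1 q.
  pose Lq := pickL v.
  have detv : det Lq v by apply: pickL_det; exact: (elimN eqP hv).
  have LqI : Lq <> PI by exact: pickL_I.
  have LqXZ : Lq = PX \/ Lq = PZ by exact: pickL_XZ.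
  pose H' := [set h in H | ~~ det Lq (phi h q)].
  pose phi' := fun h => kill q (phi h).
  have H'H : {subset H' <= H} by move=> h; rewrite inE => /andP [].
  have hdet : {in H &, forall g h, det Lq (phi (g + h) q) = det Lq (phi g q) (+) det Lq (phi h q)}.
    by move=> g h gH hH; rewrite hmul // ffunE det_mul.
  have := IH W' H' phi' hW'.
  case.
  - by rewrite inE h0 phi0 ffunE detI.
  - move=> g h; rewrite !inE => /andP [gH dg] /andP [hH dh].
    by rewrite hadd // hdet // (negPf dg) (negPf dh).
  - move=> g h /H'H gH /H'H hH; apply/ffunP => q'; rewrite /phi' hmul // !ffunE.
    by case: (q' == q).
  - move=> h; rewrite inE => /andP [hH dh] hk.
    case: (eqVneq (phi h q) PI) => hq.
      apply: hker => //; apply/ffunP => q'; have := congr1 (fun s : V => s q') hk.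
      rewrite /phi' !ffunE; case: eqP => [->|] //.
    exfalso; have hL := ndet_eq dh (elimN eqP hq) LqI.
    have := hcomm h1 h h1H hH; rewrite /comm (bigD1 q) //= hL det_sgn //.
    rewrite big1 ?mulr1; first exact: m1_neq1.
    move=> q' nq'; have := congr1 (fun s : V => s q') hk; rewrite /phi' !ffunE (negPf nq') => ->.
    exact: sgn_aI.
  - move=> h hH' q'; rewrite /phi' ffunE !inE negb_and negbK.
    case: eqP => // nq /= q'W; apply: hsupp; [exact: H'H | exact: q'W].
  - move=> g h; rewrite !inE => /andP [gH dg] /andP [hH dh].
    have := hcomm g h gH hH; rewrite /comm /phi' (bigD1 q) //= (ndet_sgn LqI dg dh) mul1r => E.
    rewrite (bigD1 q) //= !ffunE eqxx sgn_aI mul1r; apply: etrans E; apply: eq_bigr => q' nq'.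
    by rewrite !ffunE (negPf nq').
  move=> R' [L' [R'W cardR' L'XZ sepR']].
  have qR' : q \notin R' by apply: contra qW'; apply: (subsetP R'W).
  exists (q |: R'), (fun q' => if q' == q then Lq else L' q'); split.
  - by rewrite subUset sub1set qW (subset_trans R'W W'sub).
  - rewrite cardsU1 qR' add1n expnS cardR'.
    rewrite (@card_half H (fun h => det Lq (phi h q)) h1) //.
  - by move=> q'; case: eqP.
  - move=> h hH nz; case: (boolP (det Lq (phi h q))) => dh.
      by exists q; rewrite ?eqxx // !inE eqxx.
    have hH' : h \in H' by rewrite inE hH dh.
    have [q' q'R dq'] := sepR' h hH' nz.
    have nq' : q' != q by apply: contraNneq qR' => <-.
    exists q'; first by rewrite !inE q'R orbT.
    by move: dq'; rewrite /phi' ffunE (negPf nq').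
move=> hno.
have hall : {in H, forall h, phi h q = PI}.
  move=> h hH; case: (eqVneq (phi h q) PI) => // hne; exfalso.
  by move/negP: hno; apply; apply/exists_inP; exists h.
have hsupp' : {in H, forall h q', q' \notin W' -> phi h q' = PI}.
  move=> h hH q' q'W'; case: (eqVneq q' q) => [->|nq]; first exact: hall.
  by apply: hsupp => //; move: q'W'; rewrite !inE nq.
have [R' [L' [R'W cR' LXZ sepR']]] := IH W' H phi hW' h0 hadd hmul hker hsupp' hcomm.
exists R', L'; split => //; exact: subset_trans R'W W'sub.
Qed.

End Sep.

Lemma adjmxM (p q r : nat) (A : 'M[algC]_(p, q)) (B : 'M[algC]_(q, r)) :
  adjmx (A *m B) = adjmx B *m adjmx A.
Proof. by rewrite /adjmx map_mxM trmx_mul. Qed.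

Lemma onb_span (N : nat) (T : finType) (f : T -> 'cV[algC]_N) :
  #|T| = N -> (forall x y, dotv (f x) (f y) = (x == y)%:R) ->
  forall v, v = \sum_x dotv (f x) v *: f x.
Proof.
move=> hT horth v.
pose gof (j : 'I_N) : T := enum_val (cast_ord (esym hT) j).
have gof_inj : injective gof.
  by move=> j j' /enum_val_inj /cast_ord_inj.
have gof_bij : bijective gof.
  exists (fun x => cast_ord hT (enum_rank x)) => j; rewrite /gof.
    by rewrite enum_valK cast_ordKV.
  by rewrite cast_ordK enum_rankK.
pose M : 'M[algC]_N := \matrix_(i, j) f (gof j) i 0.
have hM : adjmx M *m M = 1%:M.
  apply/matrixP => j j'; rewrite !mxE -(inj_eq gof_inj) -horth /dotv !mxE.
  by apply: eq_bigr => i _; rewrite !mxE.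
have hM' := mulmx1C hM.
apply/matrixP => i z; rewrite (ord1 z).
have := congr1 (fun w => (w *m v) i 0) hM'; rewrite /= mul1mx -mulmxA => <-.
rewrite summxE (reindex gof) /=; last by apply: onW_bij.
rewrite !mxE; apply: eq_bigr => j _; rewrite !mxE /dotv !mxE mulrC.
congr (_ * _); apply: eq_bigr => l _; rewrite !mxE //.
Qed.

Definition vst (L : pauli) (b : bool) : algC :=
  match L with PX => (sqrtC 2)^-1 | _ => if b then 0 else 1 end.
Definition sq1 (L a : pauli) : algC :=
  \sum_(b' : bool) \sum_(b : bool) (vst L b)^* * pauli_entry a b b' * vst L b'.

Definition r2 : algC := (sqrtC 2)^-1.
Lemma r2c : r2^* = r2.
Proof.
have h : (sqrtC 2 : algC)^* = sqrtC 2 by apply: geC0_conj; rewrite sqrtC_ge0 ler0n.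
rewrite /r2 fmorphV; exact: (congr1 GRing.inv h).
Qed.
Lemma r2r2 : r2 * r2 = 2^-1.
Proof. by rewrite /r2 -invfM -expr2 sqrtCK. Qed.
Lemma half2 : 2^-1 + 2^-1 = 1 :> algC.
Proof. by rewrite -mulr2n -(mulr_natr (2^-1 : algC) 2) mulVf // pnatr_eq0. Qed.

Lemma sq1_I L : L = PX \/ L = PZ -> sq1 L PI = 1.
Proof.
case=> ->; rewrite /sq1 !big_bool /=; rewrite -/r2 ?r2c; csimp; rewrite ?rmorph1 ?rmorph0; csimp => //.
by rewrite r2r2 half2.
Qed.

Lemma sq1_det L a : L = PX \/ L = PZ -> det L a -> sq1 L a = 0.
Proof.
case=> ->; case: a => //= _; rewrite /sq1 !big_bool /= -/r2 ?r2c; csimp; rewrite ?rmorph1 ?rmorph0; csimp => //.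
all: by rewrite addNr.
Qed.

Section Ket.
Variables (Q : finType) (Lq : Q -> pauli).
Definition ketL : ket Q := \col_k \prod_q vst (Lq q) (bits k q).

Lemma expectE u : (adjmx ketL *m pstr_mx u *m ketL) 0 0 = \prod_q sq1 (Lq q) (u q).
Proof.
rewrite mxE (eq_bigr (fun j => \sum_i \prod_q ((vst (Lq q) (bits i q))^* * pauli_entry (u q) (bits i q) (bits j q) * vst (Lq q) (bits j q)))); last first.
  move=> j _; rewrite mxE mulr_suml; apply: eq_bigr => i _.
  by rewrite /adjmx /pstr_mx /ketL !mxE rmorph_prod -!big_split.
rewrite (eq_bigr (fun j => \prod_q \sum_b (vst (Lq q) b)^* * pauli_entry (u q) b (bits j q) * vst (Lq q) (bits j q))); last first.
  move=> j _; exact: (sum_prod_bits (fun q b => (vst (Lq q) b)^* * pauli_entry (u q) b (bits j q) * vst (Lq q) (bits j q))).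
exact: (sum_prod_bits (fun q b' => \sum_b (vst (Lq q) b)^* * pauli_entry (u q) b b' * vst (Lq q) b')).
Qed.

Lemma dot_pstr s t : dotv (pstr_mx s *m ketL) (pstr_mx t *m ketL) =
   ph s t * \prod_q sq1 (Lq q) (pmul s t q).
Proof.
rewrite /dotv adjmxM adj_pstr -!mulmxA (mulmxA (pstr_mx s)) pstrM -scalemxAl -scalemxAr.
by rewrite mxE mulmxA expectE.
Qed.
End Ket.

Lemma i3 : ('i ^+ 3 : algC) = - 'i.
Proof. by rewrite exprS expr2 mulCii mulrN1. Qed.

Lemma i_pow_sq (a : 'I_4) : ('i ^+ a : algC) * 'i ^+ a = 1 -> ('i ^+ a : algC) = 1 \/ ('i ^+ a : algC) = -1.
Proof.
case: a => [[|[|[|[|//]]]]] _ /=.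
- by left; rewrite expr0.
- by rewrite expr1 mulCii => /m1_neq1.
- by right; rewrite expr2 mulCii.
- by rewrite i3 mulrNN mulCii => /m1_neq1.
Qed.

Lemma scal1_inj (Q : finType) a b : a *: (1%:M : op Q) = b *: 1%:M -> a = b.
Proof.
move/matrixP/(_ (Ordinal (hdim_gt0 Q)) (Ordinal (hdim_gt0 Q))).
by rewrite !mxE eqxx !mulr1.
Qed.

Lemma scal_cancel (p q : nat) (M : 'M[algC]_(p, q)) a b : a *: M = b *: M -> M != 0 -> a = b.
Proof.
move=> E nz; have : (a - b) *: M = 0 by rewrite scalerBl E subrr.
by move/eqP; rewrite scaler_eq0 (negPf nz) orbF subr_eq0 => /eqP.
Qed.

Lemma mxPM n (P P' : pauli_op n) : pauli_mx P *m pauli_mx P' =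
  ('i ^+ pphase P * 'i ^+ pphase P' * ph (pletters P) (pletters P')) *: pstr_mx (pmul (pletters P) (pletters P')).
Proof. by rewrite /pauli_mx -scalemxAl -scalemxAr pstrM !scalerA. Qed.

Lemma pmulC (Q : finType) (s t : {ffun Q -> pauli}) : pmul s t = pmul t s.
Proof. by apply/ffunP => q; rewrite !ffunE mulpC. Qed.

Lemma mul_in (x y : algC) : x \in [:: 1; -1; 'i; - 'i] -> y \in [:: 1; -1; 'i; - 'i] ->
  x * y \in [:: 1; -1; 'i; - 'i].
Proof.
rewrite !inE => hx hy.
case/orP: hx => [/eqP->|/orP [/eqP->|/orP [/eqP->|/eqP->]]];
case/orP: hy => [/eqP->|/orP [/eqP->|/orP [/eqP->|/eqP->]]];
rewrite ?mulr1 ?mul1r ?mulrN1 ?mulN1r ?mulrN ?mulNr ?opprK ?mulCii ?opprK ?eqxx ?orbT //.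
Qed.

End Helpers.
Import Helpers.

Theorem mainTheorem3 (n k : nat) (hk : (k <= n)%N)
    (U : Zgrp (n - k) -> pauli_op n) (hU : stabilizer_code U) :
  exists R : {set 'I_n}, #|R| = (n - k)%N /\
  exists c : Zgrp (n - k) -> Zgrp (n - k) -> algC,
    [/\ (forall g g', restr R (U g) *m restr R (U g') = c g g' *: restr R (U (g + g'))),
        (forall g g', c g g' \in [:: 1; -1; 'i; - 'i]),
        (forall g, restr R (U g) *m adjmx (restr R (U g)) = 1%:M),
        injective (fun g => restr R (U g)) &
        (forall g (a : algC), restr R (U g) = a%:M -> g = 0)] /\
    exists e : ket (qubits_of R),
      [/\ (forall g g', dotv (restr R (U g) *m e) (restr R (U g') *m e)
                          = (g == g')%:R),
          (forall v : ket (qubits_of R), exists a : Zgrp (n - k) -> algC,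
              v = \sum_g a g *: (restr R (U g) *m e)) &
          (forall g g', restr R (U g) *m (restr R (U g') *m e)
                          = c g g' *: (restr R (U (g + g')) *m e))].
Proof.
case: hU => hU0 hhom hinj hneg.
set m := (n - k)%N.
have zn0 : forall g, ('i ^+ pphase (U g) : algC) != 0.
  by move=> g; rewrite expf_neq0 // neq0Ci.
have hmul : forall g h, pletters (U (g + h)) = pmul (pletters (U g)) (pletters (U h)).
  by move=> g h; have := hhom g h; rewrite mxPM /pauli_mx => E; exact: pstr_det (zn0 _) E.
have phi0 : pletters (U 0) = pone _.
  by rewrite -(pmulss (pletters (U 0))) -hmul addr0.
have hker : forall h, pletters (U h) = pone _ -> h = 0.
  move=> h hp.
  have E1 : pauli_mx (U h) = 'i ^+ pphase (U h) *: 1%:M by rewrite /pauli_mx hp pstr1.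
  have E2 := hhom h h.
  rewrite addGG hU0 E1 -scalemxAl mul1mx scalerA in E2.
  have E3 : ('i ^+ pphase (U h) : algC) * 'i ^+ pphase (U h) = 1.
    by apply: (@scal1_inj 'I_n); rewrite -E2 scale1r.
  case: (i_pow_sq E3) => hz.
    by apply: hinj => /=; rewrite E1 hz scale1r hU0.
  by exfalso; apply: (hneg h); rewrite E1 hz scaleN1r.
have hcomm : forall g h, comm (pletters (U g)) (pletters (U h)).
  move=> g h.
  have E : pauli_mx (U g) *m pauli_mx (U h) = pauli_mx (U h) *m pauli_mx (U g).
    by rewrite -!hhom addrC.
  rewrite !mxPM (pmulC (pletters (U h))) in E.
  have E' := scal_cancel E (pstr_neq0 _).
  rewrite [X in _ = X * _]mulrC in E'.
  have E'' := mulfI (mulf_neq0 (zn0 g) (zn0 h)) E'.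
  have hs : ph (pletters (U g)) (pletters (U h)) =
      (\prod_q sgn (pletters (U g) q) (pletters (U h) q)) * ph (pletters (U h)) (pletters (U g)).
    by rewrite /ph -big_split; apply: eq_bigr => q _; exact: p1_sgn.
  have nz : ph (pletters (U h)) (pletters (U g)) != 0.
    by apply/prodf_neq0 => q _; exact: p1_neq0.
  rewrite /comm; apply: (mulIf nz); by rewrite mul1r -hs.
have a1 : (#|[set: 'I_n]| <= n)%N by rewrite cardsT card_ord.
have a2 : (0 : Zgrp m) \in setT by rewrite inE.
have a3 : {in [set: Zgrp m] &, forall g h, g + h \in [set: Zgrp m]} by move=> *; rewrite inE.
have a4 : {in [set: Zgrp m] &, forall g h, pletters (U (g + h)) = pmul (pletters (U g)) (pletters (U h))}.
  by move=> g h _ _; exact: hmul.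
have a5 : {in [set: Zgrp m], forall h, pletters (U h) = pone _ -> h = 0} by move=> h _; exact: hker.
have a6 : {in [set: Zgrp m], forall h q, q \notin [set: 'I_n] -> pletters (U h) q = PI}.
  by move=> h _ q; rewrite inE.
have a7 : {in [set: Zgrp m] &, forall g h, comm (pletters (U g)) (pletters (U h))}.
  by move=> g h _ _; exact: hcomm.
have [R [L [_ cardR LXZ sepR]]] :=
  @sep_main m n n setT setT (fun g => pletters (U g)) a1 a2 a3 a4 a5 a6 a7.
have cardG : #|Zgrp m| = (2 ^ m)%N by rewrite card_mx card_Fp // mul1n.
have cR : #|R| = m.
  by apply: (@expnI 2) => //; rewrite cardR cardsT cardG.
exists R; split; first exact: cR.
pose Q := qubits_of R.
pose sR (g : Zgrp m) : {ffun Q -> pauli} := [ffun q : Q => pletters (U g) (val q)].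
have rE : forall g, restr R (U g) = pstr_mx (sR g) by [].
have sR_mul : forall g h, sR (g + h) = pmul (sR g) (sR h).
  by move=> g h; apply/ffunP => q; rewrite !ffunE hmul ffunE.
have sR_ker : forall g, sR g = pone _ -> g = 0.
  move=> g hs; apply/eqP; apply: contraT => nz.
  have [q qR dq] := sepR g (in_setT g) nz.
  have := congr1 (fun s : {ffun Q -> pauli} => s (exist _ q qR)) hs.
  by rewrite !ffunE /= => hq; rewrite hq detI in dq.
have add0_eq : forall g h : Zgrp m, g + h = 0 -> g = h.
  by move=> g h h0; rewrite -(addr0 g) -(addGG h) addrA h0 add0r.
have sR_inj : forall g h, sR g = sR h -> g = h.
  move=> g h E; apply: add0_eq; apply: sR_ker; by rewrite sR_mul E pmulss.
pose e := ketL (fun q : Q => L (val q)).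
have horth : forall g g', dotv (restr R (U g) *m e) (restr R (U g') *m e) = (g == g')%:R.
  move=> g g'; rewrite !rE dot_pstr -sR_mul.
  case: eqVneq => [<-|ne].
    rewrite ph_ss mul1r addGG; apply: big1 => q _; rewrite ffunE phi0 ffunE.
    apply: sq1_I; exact: LXZ.
  have nz : g + g' != 0 by apply/eqP => /add0_eq /eqP; rewrite (negPf ne).
  have [q qR dq] := sepR (g + g') (in_setT _) nz.
  rewrite (bigD1 (exist _ q qR)) //= ffunE /= sq1_det ?mul0r ?mulr0 //.
exists (fun g g' => ph (sR g) (sR g')); split; first split.
- by move=> g g'; rewrite !rE pstrM sR_mul.
- move=> g g'; rewrite /ph; apply: (big_ind (fun x => x \in [:: 1; -1; 'i; - 'i])).
  + by rewrite inE eqxx.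
  + by move=> x y; exact: mul_in.
  + by move=> q _; exact: p1_in.
- by move=> g; rewrite rE adj_pstr pstr_sq.
- move=> g g' /=; rewrite !rE => E; apply: sR_inj.
  by apply: (@pstr_det _ 1 1 _ _ (oner_neq0 _)); rewrite !scale1r.
- move=> g a; rewrite rE -scalemx1 -pstr1 => E; apply: sR_ker.
  by apply: (@pstr_det _ 1 a _ _ (oner_neq0 _)); rewrite scale1r.
exists e; split.
- exact: horth.
- move=> v; exists (fun g => dotv (restr R (U g) *m e) v).
  have hT : #|Zgrp m| = hdim Q.
    rewrite cardG /hdim card_ffun card_bool card_sig -cR.
    by congr (_ ^ _)%N; apply: eq_card => x; rewrite inE.
  exact: (@onb_span _ (Zgrp m) (fun g => restr R (U g) *m e) hT horth v).
- by move=> g g'; rewrite !rE mulmxA pstrM sR_mul scalemxAl.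
Qed.
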